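(* For every loop $\bar p$ based at $a\in K$, $\chi_{\bar p}^*\chi_{\bar p}=Q_{\bar p}\otimes I$ on $H_a\otimes l^2(S_a)$ (and zero on the other summands of $\mathcal H$), where $Q_{\bar p}$ is the orthogonal projection of $H_a$ onto the domain $H_{\bar p^{-1}*\bar p}=H_{\bar p}$.
   Context: $K$ is a partially ordered set. Elementary paths on $K$: for $b\le a$ the formal symbol $(b,a)$ and for $b\ge a$ the formal symbol $\overline{(b,a)}$; both have starting point $\partial_1=a$ and ending point $\partial_0=b$; $(a,a)=\overline{(a,a)}=:i_a$ is the trivial path. The reverse of $(b,a)$ is $\overline{(a,b)}$ and the reverse of $\overline{(b,a)}$ is $(a,b)$. $\overline S$ is the set of finite sequences $\bar p=s_n*\cdots*s_1$ of elementary paths with $\partial_0 s_{i-1}=\partial_1 s_i$; $\partial_1\bar p=\partial_1 s_1$, $\partial_0\bar p=\partial_0 s_n$, $\bar p^{-1}=s_1^{-1}*\cdots*s_n^{-1}$, and the concatenation $\bar p*\bar q$ is defined when $\partial_1\bar p=\partial_0\bar q$. The equivalence $\sim$ on $\overline S$ is the smallest equivalence relation compatible with concatenation such that for all $a\le b\le c$: $(a,b)*(b,c)\sim(a,c)$, $\overline{(c,b)}*\overline{(b,a)}\sim\overline{(c,a)}$, $(a,b)*\overline{(b,a)}\sim i_a$, $\overline{(b,a)}*(a,b)\sim i_b$. Equivalence classes $p=[\bar p]$ are called paths. $S_a$ denotes the set of paths $p$ with $\partial_0p=a$. A loop based at $a$ is $\bar p\in\overline S$ with $\partial_0\bar p=\partial_1\bar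 p=a$. For each $a\in K$, $H_a$ is a Hilbert space with orthonormal basis $\{e^a_n\}_{n\ge1}$; for $a\le b$, $\gamma_{ba}:H_a\to H_b$ is an isometry mapping each basis vector $e^a_n$ to a basis vector of $\{e^b_m\}$, with $\gamma_{aa}=\mathrm{id}$ and $\gamma_{ca}=\gamma_{cb}\gamma_{ba}$ for $a\le b\le c$. $l^2(S_a)$ is the Hilbert space with orthonormal basis $\{e_p\}_{p\in S_a}$, and $\mathcal H=\bigoplus_{a\in K}H_a\otimes l^2(S_a)$. For $a\le b$, $\chi_a^b\in B(\mathcal H)$ vanishes on all summands other than $H_a\otimes l^2(S_a)$ and satisfies $\chi_a^b(h\otimes e_p)=\gamma_{ba}(h)\otimes e_{[\overline{(b,a)}*\bar p]}$ for $h\in H_a$, $p\in S_a$, $\bar p\in p$; $\chi_a^{b*}$ is its adjoint. For an elementary path put $\chi_{\overline{(b,a)}}=\chi_a^b$ ($a\le b$) and $\chi_{(b,a)}=\chi_b^{a*}$ ($b\le a$), and for $\bar p=s_n*\cdots*s_1\in\overline S$ put $\chi_{\bar p}=\chi_{s_n}\cdots\chi_{s_1}$. The domain $H_{\bar p}$ of $\bar p$ is the closed subspace of $H_{\partial_1\bar p}$ consisting of the vectors $h$ with $\|\chi_{\bar p}(h\otimes e_s)\|=\|h\|$ for all $s\in S_{\partial_1\bar p}$. *)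

(* Defs.v *)
From Stdlib Require Import Reals List ClassicalEpsilon.
Import ListNotations.
Open Scope R_scope.

Definition C := (R * R)%type.
Definition C0 : C := (0, 0).
Definition Cnormsq (z : C) : R := fst z * fst z + snd z * snd z.
Definition Csub (z w : C) : C := (fst z - fst w, snd z - snd w).

Fixpoint sumsq {I : Type} (x : I -> C) (L : list I) : R :=
  match L with nil => 0 | i :: L' => Cnormsq (x i) + sumsq x L' end.
Definition partial_sums {I : Type} (x : I -> C) (s : R) : Prop :=
  exists L : list I, NoDup L /\ s = sumsq x L.
Definition l2 {I : Type} (x : I -> C) : Prop :=
  exists M, forall s, partial_sums x s -> s <= M.
Definition normsq_is {I : Type} (x : I -> C) (r : R) : Prop :=
  is_lub (partial_sums x) r.
Definition same_norm {I J : Type} (x : I -> C) (y : J -> C) : Prop :=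
  forall r, normsq_is x r <-> normsq_is y r.

(** Inner product on H_a = l^2(nat) (basis e_n): <x,y> = sum_n x_n conj(y_n);
    orthogonality = real and imaginary parts of the series sum to 0. *)
Definition orthogonal_nat (x y : nat -> C) : Prop :=
  infinite_sum (fun n => fst (x n) * fst (y n) + snd (x n) * snd (y n)) 0 /\
  infinite_sum (fun n => snd (x n) * fst (y n) - fst (x n) * snd (y n)) 0.

Definition is_orth_proj (M : (nat -> C) -> Prop) (Q : (nat -> C) -> (nat -> C)) : Prop :=
  forall h, l2 h ->
    l2 (Q h) /\ M (Q h) /\
    forall m, M m -> orthogonal_nat (fun n => Csub (h n) (Q h n)) m.

Section Paths.
Context {K : Type} (le : K -> K -> Prop).

(** Elementary paths: [Up b a] is (b,a) with b <= a; [Dn b a] is overline(b,a) with b >= a.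
    Both have starting point a and ending point b. *)
Inductive elem : Type := Up (b a : K) | Dn (b a : K).

Definition e_start (s : elem) : K := match s with Up _ a | Dn _ a => a end.
Definition e_end (s : elem) : K := match s with Up b _ | Dn b _ => b end.
Definition e_wf (s : elem) : Prop := match s with Up b a => le b a | Dn b a => le a b end.
Definition e_inv (s : elem) : elem := match s with Up b a => Dn a b | Dn b a => Up a b end.

(** A sequence s_n * ... * s_1 is represented by the list [s_n; ...; s_1];
    concatenation is list append; composability: start s_i = end s_{i-1}. *)
Fixpoint chain (l : list elem) : Prop :=
  match l with
  | nil => True
  | s :: l' =>
      e_wf s /\ match l' with nil => True | t :: _ => e_start s = e_end t end /\ chain l'
  end.
Definition wf (l : list elem) : Prop := l <> nil /\ chain l.
Definition ends_at (l : list elem) (c : K) : Prop :=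
  exists s l', l = s :: l' /\ e_end s = c.
Definition starts_at (l : list elem) (c : K) : Prop :=
  exists s l', l = l' ++ [s] /\ e_start s = c.
Definition pinv (l : list elem) : list elem := rev (map e_inv l).

(** Generating relations (a <= b <= c); i_a = (a,a) = overline(a,a). *)
Inductive gen : list elem -> list elem -> Prop :=
| g_up : forall a b c, le a b -> le b c -> gen [Up a b; Up b c] [Up a c]
| g_dn : forall a b c, le a b -> le b c -> gen [Dn c b; Dn b a] [Dn c a]
| g_ud : forall a b, le a b -> gen [Up a b; Dn b a] [Up a a]
| g_du : forall a b, le a b -> gen [Dn b a; Up a b] [Up b b]
| g_triv : forall a, gen [Up a a] [Dn a a].

Inductive pequiv : list elem -> list elem -> Prop :=
| pe_refl : forall l, pequiv l l
| pe_sym : forall l l', pequiv l l' -> pequiv l' l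
| pe_trans : forall l1 l2 l3, pequiv l1 l2 -> pequiv l2 l3 -> pequiv l1 l3
| pe_step : forall l1 r r' l2, gen r r' -> pequiv (l1 ++ r ++ l2) (l1 ++ r' ++ l2).

(** Paths = equivalence classes, represented as predicates on sequences *)
Definition cls (l : list elem) : list elem -> Prop := pequiv l.
Definition in_S (c : K) (P : list elem -> Prop) : Prop :=
  exists l, wf l /\ ends_at l c /\ P = cls l.
Definition prepend (s : elem) (P : list elem -> Prop) : list elem -> Prop :=
  fun l' => exists l, P l /\ pequiv (s :: l) l'.

(** Index set of the orthonormal basis e^c_n (x) e_P of
    H = (+)_c H_c (x) l^2(S_c). *)
Definition Idx : Type := (K * nat * (list elem -> Prop))%type.

(** the Hilbert space H: l^2 vectors supported on {(c,n,P) | P in S_c} *)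
Definition inH (x : Idx -> C) : Prop :=
  l2 x /\ forall c n P, ~ in_S c P -> x (c, n, P) = C0.

(** Operator on l^2(Idx) sending e_i to e_(phi i) for i in D and e_i to 0
    otherwise (phi injective on D), and its adjoint. *)
Definition basis_op (D : Idx -> Prop) (phi : Idx -> Idx) (y : Idx -> C) : Idx -> C :=
  fun j => match excluded_middle_informative (exists i, D i /\ phi i = j) with
           | left H => y (proj1_sig (constructive_indefinite_description _ H))
           | right _ => C0 end.
Definition basis_op_adj (D : Idx -> Prop) (phi : Idx -> Idx) (y : Idx -> C) : Idx -> C :=
  fun i => match excluded_middle_informative (D i) with
           | left _ => y (phi i) | right _ => C0 end.

Context (sigma : K -> K -> nat -> nat).
(** gamma_{ba} e^a_n = e^b_{sigma b a n} *)

Definition dom (a : K) : Idx -> Prop :=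
  fun i => let '(c, _, P) := i in c = a /\ in_S a P.
Definition emb (a b : K) : Idx -> Idx :=
  fun i => let '(_, n, P) := i in (b, sigma b a n, prepend (Dn b a) P).

(** chi_a^b = basis_op (dom a) (emb a b); chi_{overline(b,a)} = chi_a^b,
    chi_{(b,a)} = chi_b^{a*}. *)
Definition chi_e (s : elem) : (Idx -> C) -> (Idx -> C) :=
  match s with
  | Dn b a => basis_op (dom a) (emb a b)
  | Up b a => basis_op_adj (dom b) (emb b a)
  end.
Definition chi_e_adj (s : elem) : (Idx -> C) -> (Idx -> C) :=
  match s with
  | Dn b a => basis_op_adj (dom a) (emb a b)
  | Up b a => basis_op (dom b) (emb b a)
  end.

Definition chi (l : list elem) : (Idx -> C) -> (Idx -> C) :=
  fold_right (fun s f y => chi_e s (f y)) (fun y => y) l.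
Definition chi_adj (l : list elem) : (Idx -> C) -> (Idx -> C) :=
  fold_right (fun s f y => f (chi_e_adj s y)) (fun y => y) l.

Definition tensor (a : K) (h : nat -> C) (P0 : list elem -> Prop) : Idx -> C :=
  fun i => let '(c, n, P) := i in
    match excluded_middle_informative (c = a /\ P = P0) with
    | left _ => h n | right _ => C0 end.

Definition pdomain (l : list elem) (h : nat -> C) : Prop :=
  exists a, starts_at l a /\ l2 h /\
    forall s, in_S a s -> same_norm (chi l (tensor a h s)) h.

End Paths.

(* Main.v *)
Require Import Defs.
From Stdlib Require Import Reals List ClassicalEpsilon Classical FunctionalExtensionality PropExtensionality Lra Lia FinFun.
Import ListNotations.

Section Norm.
Variable J : Type.

Lemma sumsq_filter (x : nat -> Defs.C) k0 L : x k0 = C0 ->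
  sumsq x L = sumsq x (filter (fun k => negb (Nat.eqb k k0)) L).
Proof.
  intro H. induction L as [|k L IH]; simpl; auto.
  destruct (Nat.eqb_spec k k0); simpl.
  - subst. rewrite H, IH. unfold Cnormsq, C0; simpl. ring.
  - rewrite IH. auto.
Qed.

Lemma Cnormsq_nonneg z : (0 <= Cnormsq z)%R.
Proof. unfold Cnormsq. nra. Qed.

Lemma Cnormsq_pos z : z <> C0 -> (0 < Cnormsq z)%R.
Proof.
  destruct z as [x y]. unfold Cnormsq, C0; simpl. intro H.
  destruct (Req_dec x 0); destruct (Req_dec y 0); subst; [congruence| nra | nra | nra].
Qed.

Lemma lub_iff (E1 E2 : R -> Prop) r : (forall s, E1 s <-> E2 s) -> (is_lub E1 r <-> is_lub E2 r).
Proof.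
  intro E. unfold is_lub, is_upper_bound. split; intros [H1 H2]; split.
  - intros x Hx. apply H1, E, Hx.
  - intros b Hb. apply H2. intros x Hx. apply Hb, E, Hx.
  - intros x Hx. apply H1, E, Hx.
  - intros b Hb. apply H2. intros x Hx. apply Hb, E, Hx.
Qed.

Lemma l2_lub {I : Type} (x : I -> Defs.C) : l2 x -> exists r, normsq_is x r.
Proof.
  intros [M HM].
  destruct (completeness (partial_sums x)) as [r Hr].
  - exists M. intros s Hs. apply HM, Hs.
  - exists 0%R. exists []. split; [constructor|reflexivity].
  - exists r. exact Hr.
Qed.

Lemma zero_off (h : nat -> Defs.C) (N : nat -> Prop) : l2 h ->
  same_norm (fun n => if excluded_middle_informative (N n) then h n else C0) h ->
  forall n, ~ N n -> h n = C0.
Proof.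
  intros Hl Hs n0 Hn0.
  destruct (classic (h n0 = C0)) as [E|E]; auto. exfalso.
  set (hN := fun n => if excluded_middle_informative (N n) then h n else C0) in *.
  destruct (l2_lub h Hl) as [r Hr].
  pose proof (proj2 (Hs r) Hr) as HrN.
  assert (HpN : hN n0 = C0) by (unfold hN; destruct (excluded_middle_informative (N n0)); tauto).
  assert (Hub : is_upper_bound (partial_sums hN) (r - Cnormsq (h n0))%R).
  { intros s [L [HL Es]]. subst s.
    rewrite (sumsq_filter hN n0 L HpN).
    set (L0 := filter (fun k => negb (Nat.eqb k n0)) L).
    assert (Hle : (sumsq hN L0 <= sumsq h L0)%R).
    { clear. induction L0 as [|k L1 IH]; simpl; [lra|].
      unfold hN at 1; destruct (excluded_middle_informative (N k)).
      - lra.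
      - pose proof (Cnormsq_nonneg (h k)). unfold Cnormsq at 1, C0; simpl. lra. }
    assert (Hin : partial_sums h (sumsq h (n0 :: L0))).
    { exists (n0 :: L0). split; auto. constructor.
      - unfold L0. rewrite filter_In. intros [_ Hc]. rewrite Nat.eqb_refl in Hc. discriminate.
      - apply NoDup_filter. exact HL. }
    pose proof (proj1 Hr _ Hin). simpl in H. lra. }
  pose proof (proj2 HrN _ Hub). pose proof (Cnormsq_pos _ E). lra.
Qed.

End Norm.

Section Reindex.
Variable J : Type.
Variable G : nat -> J -> Prop.
Variable h : nat -> Defs.C.
Variable y : J -> Defs.C.
Hypothesis Gf : forall n j j', G n j -> G n j' -> j = j'.
Hypothesis Gi : forall n n' j, G n j -> G n' j -> n = n'.
Hypothesis Hy1 : forall n j, G n j -> y j = h n.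
Hypothesis Hy0 : forall j, (forall n, ~ G n j) -> y j = C0.

Definition hN n := if excluded_middle_informative (exists j, G n j) then h n else C0.

Lemma ps_y_hN L : NoDup L -> exists L', NoDup L' /\ sumsq y L = sumsq hN L' /\
  (forall n, In n L' -> exists j, In j L /\ G n j).
Proof.
  induction L as [|j L IH]; intro HL.
  - exists []. simpl. repeat split; auto. constructor. intros n [].
  - apply NoDup_cons_iff in HL. destruct HL as [Hj HL].
    destruct (IH HL) as [L' [HL' [E Hin]]].
    destruct (classic (exists n, G n j)) as [[n Hn]|Hn].
    + exists (n :: L'). split; [|split].
      * constructor; auto. intro Hn'. destruct (Hin n Hn') as [j' [Hj' Hg]].
        rewrite (Gf _ _ _ Hn Hg) in Hj. contradiction.
      * simpl. rewrite E, (Hy1 _ _ Hn). unfold hN.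
        destruct (excluded_middle_informative _) as [_|C]; [reflexivity|].
        exfalso. apply C. eauto.
      * intros m [<-|Hm]; [exists j; simpl; auto|].
        destruct (Hin m Hm) as [j' [? ?]]. exists j'. simpl. auto.
    + exists L'. split; [auto|split].
      * simpl. rewrite E, Hy0. unfold Cnormsq, C0; simpl. ring.
        intros n Hg. apply Hn. eauto.
      * intros m Hm. destruct (Hin m Hm) as [j' [? ?]]. exists j'. simpl. auto.
Qed.

Lemma ps_hN_y L : NoDup L -> exists L', NoDup L' /\ sumsq hN L = sumsq y L' /\
  (forall j, In j L' -> exists n, In n L /\ G n j).
Proof.
  induction L as [|n L IH]; intro HL.
  - exists []. simpl. repeat split; auto. constructor. intros n [].
  - apply NoDup_cons_iff in HL. destruct HL as [Hj HL].
    destruct (IH HL) as [L' [HL' [E Hin]]].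
    destruct (classic (exists j, G n j)) as [[j Hg]|Hn].
    + exists (j :: L'). split; [|split].
      * constructor; auto. intro Hn'. destruct (Hin j Hn') as [n' [Hj' Hg']].
        rewrite (Gi _ _ _ Hg Hg') in Hj. contradiction.
      * simpl. rewrite E, (Hy1 _ _ Hg). unfold hN at 1.
        destruct (excluded_middle_informative _) as [_|C]; [reflexivity|].
        exfalso. apply C. eauto.
      * intros m [<-|Hm]; [exists n; simpl; auto|].
        destruct (Hin m Hm) as [j' [? ?]]. exists j'. simpl. auto.
    + exists L'. split; [auto|split].
      * simpl. rewrite E. unfold hN at 1.
        destruct (excluded_middle_informative _) as [C|_]; [contradiction|].
        unfold Cnormsq, C0; simpl. ring.
      * intros m Hm. destruct (Hin m Hm) as [j' [? ?]]. exists j'. simpl. auto.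
Qed.

Lemma same_norm_reindex : same_norm y hN.
Proof.
  intro r. apply lub_iff. intro s. split.
  - intros [L [HL E]]. destruct (ps_y_hN L HL) as [L' [HL' [E' _]]].
    exists L'. split; auto. congruence.
  - intros [L [HL E]]. destruct (ps_hN_y L HL) as [L' [HL' [E' _]]].
    exists L'. split; auto. congruence.
Qed.

End Reindex.

Section S.
Variable K : Type.
Variable le : K -> K -> Prop.
Hypothesis le_refl : forall a, le a a.
Variable sigma : K -> K -> nat -> nat.
Hypothesis sigma_inj : forall a b, le a b -> forall n m, sigma b a n = sigma b a m -> n = m.

Lemma pequiv_cons s l l' : pequiv le l l' -> pequiv le (s :: l) (s :: l').
Proof.
  induction 1.
  - apply pe_refl.
  - now apply pe_sym.
  - eapply pe_trans; eauto.
  - apply (pe_step le (s :: l1) r r' l2 H).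
Qed.

Lemma cls_eq l l' : pequiv le l l' -> cls le l = cls le l'.
Proof.
  intro H. apply functional_extensionality; intro m.
  apply propositional_extensionality; unfold cls; split; intro H1.
  - eapply pe_trans; [apply pe_sym; exact H | exact H1].
  - eapply pe_trans; eauto.
Qed.

Lemma prepend_cls s l : prepend le s (cls le l) = cls le (s :: l).
Proof.
  apply functional_extensionality; intro m.
  apply propositional_extensionality; unfold prepend, cls; split.
  - intros [l0 [H1 H2]]. eapply pe_trans; [apply pequiv_cons; exact H1|exact H2].
  - intro H. exists l. split; [apply pe_refl | exact H].
Qed.

Lemma prepend_in_S c s P : e_wf le s -> e_start s = c -> in_S le c P ->
  in_S le (e_end s) (prepend le s P).
Proof.
  intros Hs Hc [l [[Hn Hch] [[t [l' [E1 E2]]] E3]]]. subst l P.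
  rewrite prepend_cls. exists (s :: t :: l'). split; [|split].
  - split; [discriminate|]. simpl. simpl in Hch. split; [exact Hs|split; [congruence|exact Hch]].
  - exists s, (t :: l'); auto.
  - reflexivity.
Qed.

Lemma absorb a P : in_S le a P -> prepend le (Up a a) P = P.
Proof.
  intros [l [[Hn Hch] [[t [l' [E1 E2]]] E3]]]. subst.
  rewrite prepend_cls. apply cls_eq.
  simpl in Hch. destruct Hch as [Ht _].
  destruct t as [b x|b x]; simpl in *; subst.
  - apply (pe_step le [] _ _ l' (g_up le b b x (le_refl b) Ht)).
  - eapply pe_trans.
    + apply (pe_step le [] _ _ (Dn b x :: l') (g_triv le b)).
    + apply (pe_step le [] _ _ l' (g_dn le x b b Ht (le_refl b))).
Qed.

Lemma cancel_du a b P : le b a -> in_S le a P ->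
  prepend le (Dn a b) (prepend le (Up b a) P) = P.
Proof.
  intros Hba HP. pose proof HP as [l [_ [_ E3]]]. subst.
  rewrite !prepend_cls. transitivity (prepend le (Up a a) (cls le l)); [|apply absorb; exact HP].
  rewrite prepend_cls. apply cls_eq.
  apply (pe_step le [] _ _ l (g_du le b a Hba)).
Qed.

Lemma cancel_ud a b P : le a b -> in_S le a P ->
  prepend le (Up a b) (prepend le (Dn b a) P) = P.
Proof.
  intros Hab HP. pose proof HP as [l [_ [_ E3]]]. subst.
  rewrite !prepend_cls. transitivity (prepend le (Up a a) (cls le l)); [|apply absorb; exact HP].
  rewrite prepend_cls. apply cls_eq.
  apply (pe_step le [] _ _ l (g_ud le a b Hab)).
Qed.


Definition Rep (A : (@Idx K -> Defs.C) -> @Idx K -> Defs.C) (R : @Idx K -> @Idx K -> Prop) :=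
  (forall y i j, R i j -> A y j = y i) /\ (forall y j, (forall i, ~ R i j) -> A y j = C0).

Lemma Rep_uniq A R i i' j : Rep A R -> R i j -> R i' j -> i = i'.
Proof.
  intros [H1 _] Hi Hi'.
  destruct (classic (i = i')) as [E|E]; auto.
  set (y := fun k : @Idx K => if excluded_middle_informative (k = i) then ((1,0)%R : Defs.C) else C0).
  pose proof (H1 y i j Hi) as A1. pose proof (H1 y i' j Hi') as A2.
  rewrite A1 in A2. unfold y in A2.
  destruct (excluded_middle_informative (i = i)); [|congruence].
  destruct (excluded_middle_informative (i' = i)); [congruence|].
  unfold C0 in A2. injection A2. intros. exfalso. apply R1_neq_R0. auto.
Qed.

Lemma Rep_ext A R R' : Rep A R -> (forall i j, R i j <-> R' i j) -> Rep A R'.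
Proof.
  intros [H1 H2] E. split.
  - intros y i j H. apply H1, E, H.
  - intros y j H. apply H2. intros i Hi. apply (H i), E, Hi.
Qed.

Lemma basis_op_rep D phi : (forall i i', D i -> D i' -> phi i = phi i' -> i = i') ->
  Rep (basis_op D phi) (fun i j => D i /\ phi i = j).
Proof.
  intro Hinj. split.
  - intros y i j [Hd He]. unfold basis_op.
    destruct (excluded_middle_informative _) as [H|H].
    + destruct (constructive_indefinite_description _ H) as [i' [Hd' He']]. simpl.
      f_equal. apply Hinj; congruence.
    + exfalso. apply H. eauto.
  - intros y j H. unfold basis_op.
    destruct (excluded_middle_informative _) as [[i Hi]|H']; auto.
    exfalso. apply (H i Hi).
Qed.

Lemma basis_op_adj_rep D phi : Rep (basis_op_adj D phi) (fun i j => D j /\ phi j = i).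
Proof.
  split.
  - intros y i j [Hd He]. unfold basis_op_adj.
    destruct (excluded_middle_informative _); [congruence|contradiction].
  - intros y j H. unfold basis_op_adj.
    destruct (excluded_middle_informative _) as [Hd|]; auto.
    exfalso. apply (H (phi j)). auto.
Qed.

Definition RelE (s : @elem K) : @Idx K -> @Idx K -> Prop :=
  match s with
  | Dn b a => fun i j => dom le a i /\ emb le sigma a b i = j
  | Up b a => fun i j => dom le b j /\ emb le sigma b a j = i
  end.

Lemma emb_inj a b i i' : le a b -> dom le a i -> dom le a i' ->
  emb le sigma a b i = emb le sigma a b i' -> i = i'.
Proof.
  destruct i as [[c n] P], i' as [[c' n'] P']. simpl.
  intros Hab [E1 H1] [E2 H2] E. subst. injection E. intros EP En.
  rewrite (sigma_inj _ _ Hab _ _ En).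
  rewrite <- (cancel_ud a b P Hab H1), EP, (cancel_ud a b P' Hab H2). reflexivity.
Qed.

Lemma chi_e_rep s : e_wf le s -> Rep (chi_e le sigma s) (RelE s).
Proof.
  destruct s as [b a|b a]; simpl; intro Hw.
  - apply basis_op_adj_rep.
  - apply basis_op_rep. intros; eapply emb_inj; eauto.
Qed.

Lemma chi_e_adj_rep s : e_wf le s -> Rep (chi_e_adj le sigma s) (fun i j => RelE s j i).
Proof.
  destruct s as [b a|b a]; simpl; intro Hw.
  - apply basis_op_rep. intros; eapply emb_inj; eauto.
  - apply basis_op_adj_rep.
Qed.

Lemma Rep_comp A RA B RB : Rep A RA -> Rep B RB ->
  Rep (fun y => A (B y)) (fun i j => exists k, RB i k /\ RA k j).
Proof.
  intros [A1 A2] [B1 B2]. split.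
  - intros y i j [k [H1 H2]]. rewrite (A1 _ _ _ H2). apply B1, H1.
  - intros y j H. destruct (classic (exists k, RA k j)) as [[k Hk]|Hn].
    + rewrite (A1 _ _ _ Hk). apply B2. intros i Hi. apply (H i). eauto.
    + apply A2. intros k Hk. apply Hn. eauto.
Qed.

Inductive walk : K -> K -> list (@elem K) -> Prop :=
| w_nil c : walk c c []
| w_cons c0 s l : walk c0 (e_start s) l -> e_wf le s -> walk c0 (e_end s) (s :: l).

Fixpoint RelL (l : list (@elem K)) : @Idx K -> @Idx K -> Prop :=
  match l with
  | [] => fun i j => i = j
  | s :: l' => fun i j => exists k, RelL l' i k /\ RelE s k j
  end.

Lemma chi_rep c0 c1 l : walk c0 c1 l -> Rep (chi le sigma l) (RelL l).
Proof.
  induction 1.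
  - split; simpl; intros.
    + subst; auto.
    + exfalso. apply (H j). auto.
  - apply (Rep_comp _ _ _ _ (chi_e_rep s H0) IHwalk).
Qed.

Lemma chi_adj_rep c0 c1 l : walk c0 c1 l -> Rep (chi_adj le sigma l) (fun i j => RelL l j i).
Proof.
  induction 1.
  - split; simpl; intros.
    + subst; auto.
    + exfalso. apply (H j). auto.
  - eapply Rep_ext. apply (Rep_comp _ _ _ _ IHwalk (chi_e_adj_rep s H0)).
    simpl. intros i j. split; intros [k [H1 H2]]; eauto.
Qed.


Definition NRE (s : @elem K) : nat -> nat -> Prop :=
  match s with
  | Up b a => fun m n' => m = sigma a b n'
  | Dn b a => fun m n' => n' = sigma b a m
  end.

Fixpoint NRL (l : list (@elem K)) : nat -> nat -> Prop :=
  match l with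
  | [] => fun n n' => n = n'
  | s :: l' => fun n n' => exists m, NRL l' n m /\ NRE s m n'
  end.

Lemma relE_fwd s P n n' : e_wf le s -> in_S le (e_start s) P -> NRE s n n' ->
  exists P', in_S le (e_end s) P' /\ RelE s (e_start s, n, P) (e_end s, n', P').
Proof.
  destruct s as [b a|b a]; simpl; intros Hw HP Hn.
  - exists (prepend le (Up b a) P). split.
    + apply (prepend_in_S a (Up b a) P); auto.
    + split; [split; auto; apply (prepend_in_S a (Up b a) P); auto|].
      simpl. rewrite cancel_du; auto. congruence.
  - exists (prepend le (Dn b a) P). split.
    + apply (prepend_in_S a (Dn b a) P); auto.
    + split; [split; auto|]. simpl. congruence.
Qed.

Lemma relE_bwd s c n P c' n' P' : e_wf le s -> RelE s (c, n, P) (c', n', P') ->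
  c = e_start s /\ c' = e_end s /\ NRE s n n' /\ in_S le (e_end s) P'.
Proof.
  destruct s as [b a|b a]; simpl; intros Hw.
  - intros [[E1 H1] E2]. injection E2. intros. subst. auto.
  - intros [[E1 H1] E2]. injection E2. intros EP En Ec.
    split; auto. split; auto. split; auto.
    rewrite <- EP. apply (prepend_in_S a (Dn b a) P); auto.
Qed.

Lemma walk_start c0 c1 l c n P j : walk c0 c1 l -> l <> [] -> RelL l (c, n, P) j -> c = c0.
Proof.
  intro W. revert c n P j. induction W; intros cc n P j Hn HR.
  - congruence.
  - destruct HR as [[[ck nk] Pk] [H1 H2]].
    destruct l as [|t l'].
    + simpl in H1. rewrite <- H1 in H2.
      destruct j as [[cj nj] Pj].
      apply (relE_bwd s cc n P cj nj Pj H) in H2. inversion W. subst. tauto.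
    + eapply IHW; [discriminate|exact H1].
Qed.

Lemma walk_fwd c0 c1 l P n n' : walk c0 c1 l -> in_S le c0 P -> NRL l n n' ->
  exists P', in_S le c1 P' /\ RelL l (c0, n, P) (c1, n', P').
Proof.
  intro W. revert n'. induction W; intros n' HP Hn.
  - simpl in Hn. subst. exists P; simpl; auto.
  - destruct Hn as [m [H1 H2]].
    destruct (IHW m HP H1) as [Pm [HPm Hm]].
    destruct (relE_fwd s Pm m n' H HPm H2) as [P' [HP' HR]].
    exists P'. split; auto. exists (e_start s, m, Pm). auto.
Qed.

Lemma walk_bwd c0 c1 l P n c n' P' : walk c0 c1 l -> in_S le c0 P ->
  RelL l (c0, n, P) (c, n', P') -> NRL l n n' /\ c = c1 /\ in_S le c1 P'.
Proof.
  intro W. revert c n' P'. induction W; intros cc n' P' HP HR.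
  - simpl in HR. injection HR; intros; subst. simpl. auto.
  - destruct HR as [[[ck nk] Pk] [H1 H2]].
    destruct (IHW _ _ _ HP H1) as [N1 [E1 S1]].
    destruct (relE_bwd s _ _ _ _ _ _ H H2) as [_ [E2 [N2 S2]]].
    split; [exists nk; auto|auto].
Qed.


Lemma walk_of_chain s l : chain le (s :: l) -> forall c, starts_at (s :: l) c ->
  walk c (e_end s) (s :: l).
Proof.
  revert s. induction l as [|t l IH]; intros s Hch c Hs.
  - destruct Hs as [s0 [l1 [E1 E2]]].
    destruct l1 as [|x l1]; simpl in E1.
    + injection E1; intros; subst. simpl in Hch. apply w_cons; [apply w_nil|tauto].
    + injection E1; intros E3 _. destruct l1; discriminate.
  - simpl in Hch. destruct Hch as [Hw [He Hch]].
    assert (Hs' : starts_at (t :: l) c).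
    { destruct Hs as [s0 [l1 [E1 E2]]].
      destruct l1 as [|x l1]; simpl in E1.
      - discriminate.
      - injection E1; intros E3 _. exists s0, l1. auto. }
    apply w_cons; auto. rewrite He. apply IH; auto.
Qed.

Lemma walk_app c0 c1 c2 l1 l2 : walk c1 c2 l1 -> walk c0 c1 l2 -> walk c0 c2 (l1 ++ l2).
Proof.
  induction 1; intro W; simpl; auto. apply w_cons; auto.
Qed.

Lemma walk_pinv c0 c1 l : walk c0 c1 l -> walk c1 c0 (pinv l).
Proof.
  induction 1.
  - apply w_nil.
  - unfold pinv. simpl. fold (pinv l).
    apply (walk_app _ (e_start s)); auto.
    replace (e_start s) with (e_end (e_inv s)) by (destruct s; reflexivity).
    apply w_cons. destruct s; apply w_nil. destruct s; exact H0.
Qed.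

Lemma NRL_app l1 l2 n n' : NRL (l1 ++ l2) n n' <-> exists m, NRL l2 n m /\ NRL l1 m n'.
Proof.
  revert n'. induction l1 as [|s l1 IH]; intro n'; simpl.
  - split; [intro H; exists n'; auto | intros [m [H1 H2]]; congruence].
  - split.
    + intros [m [H1 H2]]. apply IH in H1. destruct H1 as [k [H3 H4]]. eauto.
    + intros [k [H1 [m [H2 H3]]]]. exists m. split; auto. apply IH. eauto.
Qed.

Lemma NRL_pinv l n n' : NRL (pinv l) n n' <-> NRL l n' n.
Proof.
  revert n n'. induction l as [|s l IH]; intros n n'.
  - simpl. split; auto.
  - unfold pinv. simpl. fold (pinv l). rewrite NRL_app. simpl.
    split.
    + intros [m [[m0 [E H1]] H2]]. subst m0. apply IH in H2. exists m. split; auto.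
      destruct s; simpl in *; auto.
    + intros [m [H1 H2]]. exists m. split.
      * exists n. split; auto. destruct s; simpl in *; auto.
      * apply IH. auto.
Qed.



Lemma same_norm_trans {I1 I2 I3 : Type} (x : I1 -> Defs.C) (y : I2 -> Defs.C) (z : I3 -> Defs.C) :
  same_norm x y -> same_norm y z -> same_norm x z.
Proof. intros H1 H2 r. split; intro H; [apply H2, H1, H | apply H1, H2, H]. Qed.

Lemma starts_uniq (l : list (@elem K)) c c' : starts_at l c -> starts_at l c' -> c = c'.
Proof.
  intros [s [l1 [E1 E2]]] [s' [l1' [E1' E2']]]. rewrite E1 in E1'.
  apply app_inj_tail in E1'. destruct E1'. congruence.
Qed.

Lemma S_nonempty a : in_S le a (cls le [Up a a]).
Proof.
  exists [Up a a]. split; [split; [discriminate|]|split].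
  - simpl. auto.
  - exists (Up a a), []. auto.
  - reflexivity.
Qed.

Section Chi.
Variables (a c1 : K) (l : list (@elem K)) (W : walk a c1 l) (Hne : l <> []).
Variables (h : nat -> Defs.C) (s : list (@elem K) -> Prop) (Hs : in_S le a s).

Let G n j := RelL l (a, n, s) j.
Let y := chi le sigma l (tensor a h s).

Lemma chi_Gf n j j' : G n j -> G n j' -> j = j'.
Proof. intros H1 H2. apply (Rep_uniq _ _ _ _ _ (chi_adj_rep _ _ _ W) H1 H2). Qed.

Lemma chi_Gi n n' j : G n j -> G n' j -> n = n'.
Proof. intros H1 H2. pose proof (Rep_uniq _ _ _ _ _ (chi_rep _ _ _ W) H1 H2). congruence. Qed.

Lemma chi_Hy1 n j : G n j -> y j = h n.
Proof.
  intro H. unfold y. rewrite (proj1 (chi_rep _ _ _ W) _ _ _ H). simpl.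
  destruct (excluded_middle_informative _) as [_|C]; auto. exfalso. auto.
Qed.

Lemma chi_Hy0 j : (forall n, ~ G n j) -> y j = C0.
Proof.
  intro H. unfold y. destruct (classic (exists i, RelL l i j)) as [[[[c m] P] Hi]|Hn].
  - rewrite (proj1 (chi_rep _ _ _ W) _ _ _ Hi). simpl.
    pose proof (walk_start _ _ _ _ _ _ _ W Hne Hi). subst c.
    destruct (excluded_middle_informative _) as [[_ E]|_]; auto.
    subst P. exfalso. apply (H m Hi).
  - apply (proj2 (chi_rep _ _ _ W)). intros i Hi. apply Hn. eauto.
Qed.

Lemma chi_dom n : (exists j, G n j) <-> (exists n', NRL l n n').
Proof.
  split.
  - intros [[[c m] P] Hg]. destruct (walk_bwd _ _ _ _ _ _ _ _ W Hs Hg) as [H _]. eauto.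
  - intros [n' Hn]. destruct (walk_fwd _ _ _ _ _ _ W Hs Hn) as [P' [_ H]]. eexists. exact H.
Qed.

Lemma chi_norm : same_norm y (hN _ G h).
Proof.
  apply same_norm_reindex.
  - apply chi_Gf.
  - apply chi_Gi.
  - apply chi_Hy1.
  - apply chi_Hy0.
Qed.

End Chi.

Lemma pdomain_char a c1 l h : walk a c1 l -> l <> [] -> starts_at l a ->
  (pdomain le sigma l h <-> l2 h /\ forall n, ~ (exists n', NRL l n n') -> h n = C0).
Proof.
  intros W Hne Hst. split.
  - intros [a' [Hst' [Hl Hn]]]. rewrite <- (starts_uniq _ _ _ Hst Hst') in Hn.
    split; auto.
    pose proof (S_nonempty a) as HS.
    pose proof (Hn _ HS) as Hsn.
    pose proof (same_norm_trans _ _ _ (fun r => iff_sym (chi_norm a c1 l W Hne h _ r)) Hsn) as H2.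
    intros n Hnn. apply (zero_off h _ Hl H2). rewrite chi_dom; eauto.
  - intros [Hl Hz]. exists a. split; auto. split; auto. intros s Hs.
    eapply same_norm_trans. apply (chi_norm a c1 l W Hne h s).
    replace (hN _ (fun n j => RelL l (a, n, s) j) h) with h; [intro r; tauto|].
    apply functional_extensionality. intro n. unfold hN.
    destruct (excluded_middle_informative _) as [_|C]; auto.
    apply Hz. rewrite <- chi_dom; eauto.
Qed.

End S.

Section Proj.

Lemma sum_single (f : nat -> R) n : (forall k, k <> n -> f k = 0%R) -> infinite_sum f (f n).
Proof.
  intro Hf.
  assert (Hs : forall m, sum_f_R0 f m = if Nat.leb n m then f n else 0%R).
  { induction m as [|m IH]; simpl.
    - destruct n; simpl; auto; try (apply Hf; discriminate).
    - rewrite IH. destruct (Nat.leb_spec n m); destruct (Nat.leb_spec n (S m)); try lia.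
      + rewrite (Hf (S m)) by lia. ring.
      + assert (n = S m) by lia. subst. ring.
      + rewrite (Hf (S m)) by lia. ring. }
  intros eps He. exists n. intros m Hm. rewrite Hs.
  destruct (Nat.leb_spec n m); [|lia]. rewrite R_dist_eq. lra.
Qed.

Definition ee (n : nat) : nat -> Defs.C := fun k => if Nat.eqb k n then ((1,0)%R : Defs.C) else C0.

Lemma ee_l2 n : l2 (ee n).
Proof.
  exists 1%R. intros s [L [HL E]]. subst s.
  assert (H : (sumsq (ee n) L <= 1)%R /\ (~ In n L -> sumsq (ee n) L = 0%R)).
  { induction L as [|k L IH]; simpl.
    - split; [lra|auto].
    - apply NoDup_cons_iff in HL. destruct HL as [Hk HL]. destruct (IH HL) as [IH1 IH2].
      assert (Ek : ee n k = if Nat.eqb k n then ((1,0)%R:Defs.C) else C0) by reflexivity.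
      rewrite Ek. destruct (Nat.eqb_spec k n).
      + subst. rewrite (IH2 Hk). unfold Cnormsq; simpl. split; [lra|]. intro C. exfalso. auto.
      + unfold Cnormsq, C0; simpl. split; [lra|]. intro C. rewrite IH2; [ring|]. auto. }
  tauto.
Qed.

Lemma proj_value (N : nat -> Prop) (M : (nat -> Defs.C) -> Prop)
  (HM : forall m, M m <-> l2 m /\ forall n, ~ N n -> m n = C0)
  (Q : (nat -> Defs.C) -> nat -> Defs.C) (HQ : is_orth_proj M Q) h (Hl : l2 h) n :
  Q h n = if excluded_middle_informative (N n) then h n else C0.
Proof.
  destruct (HQ h Hl) as [HQl [HQM Hort]].
  destruct (excluded_middle_informative (N n)) as [Hn|Hn].
  - assert (Me : M (ee n)).
    { apply HM. split; [apply ee_l2|]. intros k Hk. unfold ee.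
      destruct (Nat.eqb_spec k n); [subst; contradiction|reflexivity]. }
    destruct (Hort _ Me) as [O1 O2].
    set (d := fun k => Csub (h k) (Q h k)) in *.
    pose proof (sum_single (fun k => (fst (d k) * fst (ee n k) + snd (d k) * snd (ee n k))%R) n) as S1.
    pose proof (sum_single (fun k => (snd (d k) * fst (ee n k) - fst (d k) * snd (ee n k))%R) n) as S2.
    assert (Hz : forall k, k <> n -> ee n k = C0).
    { intros k Hk. unfold ee. destruct (Nat.eqb_spec k n); [contradiction|reflexivity]. }
    assert (A1 := uniqueness_sum _ _ _ O1 (S1 ltac:(intros k Hk; cbv beta; rewrite (Hz k Hk); unfold C0; simpl; ring))).
    assert (A2 := uniqueness_sum _ _ _ O2 (S2 ltac:(intros k Hk; cbv beta; rewrite (Hz k Hk); unfold C0; simpl; ring))).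
    unfold ee in A1, A2. rewrite Nat.eqb_refl in A1, A2. simpl in A1, A2.
    unfold d, Csub in A1, A2. simpl in A1, A2.
    destruct (h n) as [u v], (Q h n) as [u' v']. simpl in *. f_equal; lra.
  - apply HM in HQM. destruct HQM as [_ HQM]. apply HQM, Hn.
Qed.

End Proj.

Lemma l2_slice {K : Type} (x : @Idx K -> Defs.C) a P : l2 x -> l2 (fun k => x (a, k, P)).
Proof.
  intros [M HM]. exists M. intros s [L [HL E]]. subst s.
  assert (E : sumsq (fun k => x (a, k, P)) L = sumsq x (map (fun k => (a, k, P)) L)).
  { induction L; simpl; auto. f_equal. apply IHL. inversion HL; auto. }
  rewrite E. apply HM. eexists. split; [|reflexivity].
  apply Injective_map_NoDup; auto. intros u v H. congruence.
Qed.

Theorem corollary3p5 (K : Type) (le : K -> K -> Prop)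
  (le_refl : forall a, le a a)
  (le_anti : forall a b, le a b -> le b a -> a = b)
  (le_trans : forall a b c, le a b -> le b c -> le a c)
  (sigma : K -> K -> nat -> nat)
  (sigma_inj : forall a b, le a b -> forall n m, sigma b a n = sigma b a m -> n = m)
  (sigma_id : forall a n, sigma a a n = n)
  (sigma_comp : forall a b c, le a b -> le b c ->
     forall n, sigma c a n = sigma c b (sigma b a n))
  (a : K) (p : list (@elem K)) (Hwf : wf le p)
  (Hstart : starts_at p a) (Hend : ends_at p a) :
  (forall h, pdomain le sigma (pinv p ++ p) h <-> pdomain le sigma p h) /\
  (forall Q, is_orth_proj (pdomain le sigma p) Q ->
   forall x, inH le x -> forall c n P,
     chi_adj le sigma p (chi le sigma p x) (c, n, P) =
       match excluded_middle_informative (c = a) with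
       | left _ => Q (fun k => x (a, k, P)) n
       | right _ => C0
       end).
Proof.
  destruct Hwf as [Hne Hch].
  assert (W : walk K le a a p).
  { destruct Hend as [s [l' [E1 E2]]]. subst p.
    pose proof (walk_of_chain K le s l' Hch a Hstart) as Hw. rewrite E2 in Hw. exact Hw. }
  assert (W2 : walk K le a a (pinv p ++ p)).
  { apply (walk_app _ _ _ a); auto. apply walk_pinv; auto. }
  assert (Hne2 : pinv p ++ p <> []).
  { intro E. apply app_eq_nil in E. tauto. }
  assert (Hst2 : starts_at (pinv p ++ p) a).
  { destruct Hstart as [s [l1 [E1 E2]]]. exists s, (pinv p ++ l1).
    rewrite E1 at 2. rewrite app_assoc. auto. }
  assert (Hchar := fun h => pdomain_char K le le_refl sigma sigma_inj a a p h W Hne Hstart).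
  split.
  - intro h. rewrite (pdomain_char K le le_refl sigma sigma_inj a a _ h W2 Hne2 Hst2), Hchar.
    assert (Hd : forall n, (exists n', NRL K sigma (pinv p ++ p) n n') <-> (exists n', NRL K sigma p n n')).
    { intro n. split.
      - intros [n' Hn]. apply NRL_app in Hn. destruct Hn as [m [H1 _]]. eauto.
      - intros [m Hm]. exists n. apply NRL_app. exists m. split; auto. apply NRL_pinv. auto. }
    split; intros [Hl Hz]; split; auto; intros n Hn; apply Hz; rewrite Hd in *; auto.
  - intros Q HQ x Hx c n P.
    assert (HQv := proj_value _ _ Hchar Q HQ).
    destruct Hx as [Hxl Hx0].
    assert (Hsl := l2_slice x a P Hxl).
    destruct (classic (exists k, RelL K le sigma p (c, n, P) k)) as [[k Hk]|Hno].
    + rewrite (proj1 (chi_adj_rep K le le_refl sigma sigma_inj _ _ _ W) _ _ _ Hk).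
      rewrite (proj1 (chi_rep K le le_refl sigma sigma_inj _ _ _ W) _ _ _ Hk).
      pose proof (walk_start K le sigma _ _ _ _ _ _ _ W Hne Hk). subst c.
      destruct (excluded_middle_informative (a = a)) as [_|C]; [|congruence].
      rewrite HQv by exact Hsl.
      destruct (classic (in_S le a P)) as [HP|HP].
      * destruct (excluded_middle_informative _) as [_|C]; auto.
        exfalso. apply C. destruct k as [[ck nk] Pk].
        destruct (walk_bwd K le sigma _ _ _ _ _ _ _ _ W HP Hk). eauto.
      * rewrite Hx0 by exact HP. destruct (excluded_middle_informative _); auto.
    + rewrite (proj2 (chi_adj_rep K le le_refl sigma sigma_inj _ _ _ W)).
      2: { intros i Hi. apply Hno. eauto. }
      destruct (excluded_middle_informative (c = a)) as [E|_]; auto. subst c.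
      rewrite HQv by exact Hsl.
      destruct (excluded_middle_informative _) as [[n' Hn]|_]; auto.
      destruct (classic (in_S le a P)) as [HP|HP].
      * exfalso. destruct (walk_fwd K le le_refl sigma _ _ _ _ _ _ W HP Hn) as [P' [_ H]].
        apply Hno. eauto.
      * symmetry. apply Hx0. exact HP.
Qed.
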